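(* Let $H$ be a finite group of odd order with $d(H)=2$, let $G=\mathbb{Z}_2^2\times H$, and let $P$ be a position of $\mathsf{GEN}(G)$ with $P\subseteq \{e\}\times H$ and $|P|$ even. Then $\operatorname{nim}(P)=1$.
   Context: For a finite group $G$, $\mathsf{GEN}(G)$ is the following impartial two-player game. A position is a set of elements selected so far; the starting position is $\emptyset$. From a position $P$ with $\langle P\rangle\neq G$, the player to move selects some $g\in G\setminus P$, producing the position $P\cup\{g\}$ (these are the options of $P$); a position $P$ with $\langle P\rangle = G$ has no options. The nim-number of a position is defined recursively by $\operatorname{nim}(P)=\operatorname{mex}\{\operatorname{nim}(Q): Q \text{ an option of } P\}$, where $\operatorname{mex}(A)$ is the least nonnegative integer not in $A$. $d(G)$ denotes the minimum size of a generating set of $G$; $e$ denotes the identity. *)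

(* Defs.v *)
From HB Require Import structures.
From mathcomp Require Import all_boot all_order all_algebra all_fingroup.
Set Implicit Arguments. Unset Strict Implicit. Unset Printing Implicit Defensive.

Local Open Scope group_scope.

(* mex of a finite list of naturals: least k not in s (some k <= size s works) *)
Definition mex (s : seq nat) : nat :=
  find (fun k => k \notin s) (iota 0 (size s).+1).

Section Gen.
Variable gT : finGroupType.
Variable G : {set gT}.

Definition gen_rank : nat :=
  find (fun k => [exists A : {set gT}, [&& A \subset G, #|A| == k & <<A>> == G]])
       (iota 0 #|G|.+1).

Fixpoint nim_fuel (n : nat) (P : {set gT}) : nat :=
  match n with
  | 0 => 0
  | n'.+1 =>
      if <<P>> == G then 0
      else mex [seq nim_fuel n' (g |: P) | g <- enum (G :\: P)]
  end.

(* Fuel #|G|.+1 suffices for every P \subset G: each move adds a new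
   element of G, so the game tree has depth at most #|G :\: P|. *)
Definition nim (P : {set gT}) : nat := nim_fuel #|G|.+1 P.
End Gen.

(* Main.v *)
Require Import Defs.
From HB Require Import structures.
From mathcomp Require Import all_boot all_order all_algebra all_fingroup.
From mathcomp Require Import cyclic.
Set Implicit Arguments. Unset Strict Implicit. Unset Printing Implicit Defensive.

Local Open Scope group_scope.

Definition Z22 := ('Z_2 * 'Z_2)%type.
Lemma Z22_sq (z : Z22) : z * z = 1.
Proof. by case: z => [[[|[|?]] ?] [[|[|?]] ?]]; apply/eqP; vm_compute. Qed.
Lemma Z22_cover (m z x : Z22) : m != 1 -> z != 1 -> z != m ->
  [|| x == 1, x == m, x == z | x == m * z].
Proof.
by case: m => [[[|[|?]] ?] [[|[|?]] ?]]; case: z => [[[|[|?]] ?] [[|[|?]] ?]];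
   case: x => [[[|[|?]] ?] [[|[|?]] ?]]; vm_compute.
Qed.
Lemma Z22_out (m : Z22) : exists z : Z22, (z != 1) && (z != m).
Proof.
case: m => [[[|[|?]] ?] [[|[|?]] ?]]; try by [].
- by exists (inZp 1, inZp 0).
- by exists (inZp 1, inZp 0).
- by exists (inZp 0, inZp 1).
- by exists (inZp 1, inZp 0).
Qed.

Lemma Z22_card : #|[set: 'Z_2 * 'Z_2]| = 4%N.
Proof. by rewrite cardsT card_prod card_ord. Qed.

Lemma mexE s v : (forall k, k < v -> k \in s)%N -> v \notin s -> mex s = v.
Proof.
move=> Hlt Hv; rewrite /mex.
have vle : (v <= size s)%N.
  rewrite -{1}(size_iota 0 v); apply: uniq_leq_size (iota_uniq 0 v) _ => k.
  rewrite mem_iota add0n; exact: Hlt.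
set l := iota 0 (size s).+1.
have nthl : forall k, (k < (size s).+1)%N -> nth 0%N l k = k.
  by move=> k hk; rewrite nth_iota.
have hasv : has (fun k => k \notin s) l.
  apply/hasP; exists v => //; rewrite mem_iota add0n ltnS.
  exact: vle.
apply/eqP; rewrite eqn_leq; apply/andP; split.
- rewrite leqNgt; apply/negP => lt.
  have := before_find 0%N lt; rewrite nthl ?ltnS // => /negbFE.
  by rewrite (negbTE Hv).
- rewrite leqNgt; apply/negP => lt.
  have := nth_find 0%N hasv.
  rewrite nthl; first by rewrite Hlt.
  by rewrite ltnS (leq_trans (ltnW lt) vle).
Qed.

Section Main.
Variables (hT : finGroupType) (H : {group hT}).
Hypothesis Hodd : odd #|H|.
Variables (a b : hT).
Hypothesis Hab : <<[set a; b]>> = H.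

Local Notation gT := ('Z_2 * 'Z_2 * hT)%type.
Definition GG : {set gT} := setX [set: 'Z_2 * 'Z_2] H.
Local Notation N n P := (nim_fuel GG n P).

Definition p1 (T : {set gT}) : {set 'Z_2 * 'Z_2} := [set x.1 | x in T].
Definition p2 (T : {set gT}) : {set hT} := [set x.2 | x in T].

Lemma inGG (g : gT) : (g \in GG) = (g.2 \in H).
Proof. by case: g => z h; rewrite in_setX in_setT. Qed.

Lemma p2_sub (T : {set gT}) : T \subset GG -> p2 T \subset H.
Proof.
move=> TG; apply/subsetP => h /imsetP [x xT ->].
by rewrite -inGG (subsetP TG).
Qed.

Lemma mul_pair (x y : gT) : x * y = (x.1 * y.1, x.2 * y.2).
Proof. by []. Qed.
Lemma inv_pair (x : gT) : x^-1 = (x.1^-1, x.2^-1).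
Proof. by []. Qed.

Lemma expg_pair (x : gT) n : x ^+ n = (x.1 ^+ n, x.2 ^+ n).
Proof.
elim: n => [|n IH]; first by case: x.
by rewrite !expgS IH.
Qed.

Lemma gen_split (T : {set gT}) : T \subset GG -> <<T>> = setX <<p1 T>> <<p2 T>>.
Proof.
move=> TG; apply/eqP; rewrite eqEsubset; apply/andP; split.
  rewrite gen_subG; apply/subsetP => -[z h] xT; rewrite in_setX.
  by apply/andP; split; apply: mem_gen; apply/imsetP; exists (z, h).
have E1 : <<1 |: p1 T>> = <<p1 T>>.
  apply/eqP; rewrite eqEsubset (genS (subsetUr _ _)) andbT gen_subG subUset.
  by rewrite subset_gen sub1set group1.
have E2 : <<1 |: p2 T>> = <<p2 T>>.
  apply/eqP; rewrite eqEsubset (genS (subsetUr _ _)) andbT gen_subG subUset.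
  by rewrite subset_gen sub1set group1.
rewrite -E1 -E2 -setX_gen ?setU11 // gen_subG.
have key : forall x, x \in T -> (x.1, 1) \in <<T>> /\ (1, x.2) \in <<T>>.
  move=> x xT.
  have xH : x.2 \in H by rewrite -inGG (subsetP TG).
  have h1 : (x.1, 1) \in <<T>>.
    have -> : (x.1, 1) = x ^+ #|H|.
      rewrite expg_pair expg_cardG //.
      rewrite -(expg_mod (p := 2)); last by rewrite expg2 Z22_sq.
      by rewrite modn2 Hodd expg1.
    by rewrite groupX // mem_gen.
  split => //.
  have -> : (1, x.2) = (x.1, 1)^-1 * x.
    case: x xT xH h1 => z h /= _ _ _.
    rewrite mul_pair inv_pair /= invg1 mul1g.
    have -> : z^-1 = z by rewrite -[LHS]mulg1 -(Z22_sq z) mulgA mulVg mul1g.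
    by rewrite Z22_sq.
  by rewrite groupM ?groupV // mem_gen.
apply/subsetP => [[z h]]; rewrite in_setX => /andP [].
rewrite !in_setU1 => /orP [/eqP -> | /imsetP [x xT ->]] /orP [/eqP -> | /imsetP [y yT ->]].
- exact: group1.
- by case: (key y yT).
- by case: (key x xT).
- have -> : (x.1, y.2) = (x.1, 1) * (1, y.2) by rewrite mul_pair /= mulg1 mul1g.
  by rewrite groupM //; [case: (key x xT) | case: (key y yT)].
Qed.


Lemma genT (T : {set gT}) : T \subset GG ->
  (<<T>> == GG) = (<<p1 T>> == setT) && (<<p2 T>> == H).
Proof.
move=> TG; rewrite gen_split //; apply/idP/idP; last first.
  by case/andP => /eqP -> /eqP ->.
move/eqP => E; apply/andP; split; apply/eqP/setP.
- move=> z; have := congr1 (fun S : {set gT} => (z, 1) \in S) E.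
  by rewrite /= !in_setX !group1 !andbT.
- move=> h; have := congr1 (fun S : {set gT} => (1, h) \in S) E.
  by rewrite /= !in_setX !group1 ?in_setT.
Qed.

Lemma g1_M (m : 'Z_2 * 'Z_2) (A : {set 'Z_2 * 'Z_2}) :
  A \subset [set 1; m] -> <<A>> != setT.
Proof.
move=> sA; apply/negP => /eqP E.
have : <<A>> \subset <[m]>.
  rewrite gen_subG; apply: subset_trans sA _; apply/subsetP => x.
  by rewrite !inE => /orP [/eqP -> | /eqP ->]; rewrite ?group1 ?cycle_id.
move/subset_leq_card; rewrite E Z22_card -orderE.
have : (#[m] %| 2)%N by rewrite order_dvdn expg2 Z22_sq.
by move/dvdn_leq => /(_ isT) le2 /(leq_trans)/(_ le2).
Qed.

Lemma g1_gen (m z : 'Z_2 * 'Z_2) (A : {set 'Z_2 * 'Z_2}) :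
  m != 1 -> z != 1 -> z != m -> m \in A -> z \in A -> <<A>> == setT.
Proof.
move=> m1 z1 zm mA zA; rewrite eqEsubset subsetT /=.
apply/subsetP => x _.
case/or4P: (Z22_cover x m1 z1 zm) => /eqP ->.
- exact: group1.
- exact: mem_gen.
- exact: mem_gen.
- by rewrite groupM // mem_gen.
Qed.

Definition tr (S : {set hT}) := [exists h, <<h |: S>> == H].

Lemma tr_mono (S S' : {set hT}) : S \subset S' -> S' \subset H -> tr S -> tr S'.
Proof.
move=> sS sH /existsP [h /eqP E]; apply/existsP; exists h.
have hH : h \in H by rewrite -E mem_gen // setU11.
rewrite eqEsubset gen_subG subUset sub1set hH sH /= -{1}E.
by apply: genS; apply: setUS.
Qed.

Lemma aH : a \in H. Proof. by rewrite -Hab mem_gen // !inE eqxx. Qed.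
Lemma bH : b \in H. Proof. by rewrite -Hab mem_gen // !inE eqxx orbT. Qed.

Lemma gen_ab (S : {set hT}) : S \subset H -> a \in S -> b \in S -> <<S>> == H.
Proof.
move=> sH aS bS; rewrite eqEsubset gen_subG sH /= -{1}Hab genS //.
by apply/subsetP => x; rewrite !inE => /orP [/eqP -> | /eqP ->].
Qed.

Lemma gen_tr (S : {set hT}) : S \subset H -> <<S>> == H -> tr S.
Proof.
move=> sH /eqP E; apply/existsP; exists 1; rewrite eqEsubset gen_subG subUset.
by rewrite sub1set group1 sH /= -{1}E genS // subsetUr.
Qed.

Lemma nimT P n : <<P>> == GG -> N n P = 0%N.
Proof. by case: n => //= n ->. Qed.

Lemma nim_val P n v : (#|GG :\: P| < n)%N -> ~~ (<<P>> == GG) ->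
  (forall g, g \in GG :\: P -> N n.-1 (g |: P) != v) ->
  (forall k, (k < v)%N -> exists2 g, g \in GG :\: P & N n.-1 (g |: P) = k) ->
  N n P = v.
Proof.
case: n => // n _ /= /negbTE -> Hne Hk; apply: mexE.
- move=> k /Hk [g gin <-]; apply/mapP; exists g => //; by rewrite mem_enum.
- apply/mapP => [[g]]; rewrite mem_enum => gin E.
  by move: (Hne g gin); rewrite -E eqxx.
Qed.

Lemma card_opt P g n : (#|GG :\: P| < n.+1)%N -> g \in GG :\: P ->
  (#|GG :\: (g |: P)| < n)%N.
Proof.
move=> hc gin; rewrite -ltnS; apply: leq_trans hc; rewrite ltnS.
apply: proper_card; apply/properP; split.
  by apply: setDS; apply: subsetUr.
by exists g => //; rewrite inE setU11.
Qed.

Lemma extra (X T : {set gT}) : T \subset X -> ~~ odd #|X| -> odd #|T| ->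
  exists2 g, g \in X & g \notin T.
Proof.
move=> sTX eX oT; apply/exists_inP; rewrite -negb_forall_in.
apply/negP => /forall_inP sXT.
have E : T = X by apply/eqP; rewrite eqEsubset sTX; apply/subsetP.
by move: eX; rewrite -E oT.
Qed.


Lemma p2_in (T : {set gT}) x : x \in T -> x.2 \in p2 T.
Proof. by move=> xT; apply/imsetP; exists x. Qed.
Lemma p1_in (T : {set gT}) x : x \in T -> x.1 \in p1 T.
Proof. by move=> xT; apply/imsetP; exists x. Qed.
Lemma p2U1 (T : {set gT}) g : p2 (g |: T) = g.2 |: p2 T.
Proof. by rewrite /p2 imsetU1. Qed.
Lemma p1U1 (T : {set gT}) g : p1 (g |: T) = g.1 |: p1 T.
Proof. by rewrite /p1 imsetU1. Qed.
Lemma setU1_in (A : {set hT}) h : h \in A -> h |: A = A.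
Proof. by move=> hA; apply/setUidPr; rewrite sub1set. Qed.

Lemma tr_a (S : {set hT}) : S \subset H -> a \in S -> tr S.
Proof.
move=> sH aS; apply/existsP; exists b; apply: gen_ab.
- by rewrite subUset sub1set bH sH.
- by rewrite inE aS orbT.
- by rewrite setU11.
Qed.

Lemma sub_p2X (T : {set gT}) : T \subset setX [set: 'Z_2 * 'Z_2] (p2 T).
Proof.
apply/subsetP => -[z h] xT; rewrite in_setX in_setT /=.
by apply: (p2_in xT).
Qed.

Lemma Y2 n : forall T : {set gT}, T \subset GG -> (#|GG :\: T| < n)%N ->
  <<p1 T>> == setT -> ~~ (<<p2 T>> == H) ->
  N n T = if odd #|T| then 2%N else nat_of_bool (tr (p2 T)).
Proof.
elim: n => [|n IH] T TG hc g1 g2; first by [].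
have SH := p2_sub TG.
have NT : ~~ (<<T>> == GG) by rewrite genT // g1 /= (negbTE g2).
have opt : forall g, g \in GG :\: T -> N n (g |: T) =
   if <<g.2 |: p2 T>> == H then 0%N
   else if odd #|T| then nat_of_bool (tr (g.2 |: p2 T)) else 2%N.
{ move=> g gin; have /setDP [gG gT] := gin.
  have gTG : g |: T \subset GG by rewrite subUset sub1set gG TG.
  have p1g : <<p1 (g |: T)>> == setT.
    by rewrite eqEsubset subsetT /= -(eqP g1) genS // p1U1 subsetUr.
  case: ifP => E.
    by apply: nimT; rewrite genT // p1g p2U1 E.
  rewrite IH //.
  - by rewrite cardsU1 gT add1n /= p2U1; case: (odd #|T|).
  - exact: card_opt.
  - by rewrite p2U1 E. }
have tm : tr (p2 T) -> exists2 g, g \in GG :\: T & N n (g |: T) = 0%N.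
{ case/existsP => h /eqP E.
  have hH : h \in H by rewrite -E mem_gen // setU11.
  have gin : ((1, h) : gT) \in GG :\: T.
    rewrite in_setD inGG hH andbT; apply/negP => /p2_in /= hS.
    by move: g2; rewrite -(setU1_in hS) E eqxx.
  by exists (1, h) => //; rewrite opt //= E eqxx. }
case oT: (odd #|T|).
- have [g0 g0X g0T] : exists2 g, g \in setX [set: 'Z_2 * 'Z_2] (p2 T) & g \notin T.
    apply: extra; first exact: sub_p2X.
    - by rewrite cardsX Z22_card oddM.
    - by rewrite oT.
  have g0in : g0 \in GG :\: T.
    rewrite in_setD g0T inGG; move: g0X; case: g0 {g0T} => z h.
    by rewrite in_setX => /andP [_ /(subsetP SH)].
  have v0 : N n (g0 |: T) = tr (p2 T).
    move: g0X; case: g0 g0in {g0T} => z h g0in; rewrite in_setX in_setT /= => hS.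
    by rewrite opt //= (setU1_in hS) (negbTE g2) oT.
  apply: nim_val => //.
  + by move=> g gin; rewrite opt // oT; case: ifP => //; case: tr.
  + move=> k; case: k => [_|[_|//]].
    * case tS: (tr (p2 T)); first exact: tm.
      by exists g0 => //; rewrite v0 tS.
    * case tS: (tr (p2 T)); first by exists g0 => //; rewrite v0 tS.
      have aS : a \notin p2 T.
        by apply/negP => aS; move: tS; rewrite tr_a.
      have gin : ((1, a) : gT) \in GG :\: T.
        rewrite in_setD inGG aH andbT; apply/negP => /p2_in /=.
        by rewrite (negbTE aS).
      exists (1, a) => //; rewrite opt //= oT.
      have -> : (<<a |: p2 T>> == H) = false.
        apply/negbTE/negP => E; move: tS.
        by have -> : tr (p2 T) by apply/existsP; exists a.
      by rewrite tr_a // ?setU11 // subUset sub1set aH SH.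
- apply: nim_val => //.
  + move=> g gin; rewrite opt // oT; case: ifP => E.
      have -> : tr (p2 T) by apply/existsP; exists g.2.
      by [].
    by case: tr.
  + move=> k; case tS: (tr (p2 T)) => //= ; rewrite ltnS leqn0 => /eqP ->.
    exact: tm.
Qed.


Lemma MM n : forall T : {set gT}, T \subset GG -> (#|GG :\: T| < n)%N ->
  forall m, m != 1 -> m \in p1 T -> p1 T \subset [set 1; m] ->
  N n T = if odd #|T| then 2%N else nat_of_bool (tr (p2 T)).
Proof.
elim: n => [|n IH] T TG hc m m1 mT sT; first by [].
have SH := p2_sub TG.
have NT : ~~ (<<T>> == GG) by rewrite genT // (negbTE (g1_M sT)).
have [z0 /andP [z01 z0m]] := Z22_out m.
have opt : forall g, g \in GG :\: T -> N n (g |: T) =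
   if (g.1 \notin [set 1; m]) && (<<g.2 |: p2 T>> == H) then 0%N
   else if odd #|T| then nat_of_bool (tr (g.2 |: p2 T)) else 2%N.
{ move=> g gin; have /setDP [gG gT] := gin.
  have gTG : g |: T \subset GG by rewrite subUset sub1set gG TG.
  have par : odd #|g |: T| = ~~ odd #|T| by rewrite cardsU1 gT add1n.
  case inM: (g.1 \in [set 1; m]) => /=.
  - rewrite (IH _ gTG (card_opt hc gin) m m1); last 2 first.
    + by rewrite p1U1 inE mT orbT.
    + by rewrite p1U1 subUset sub1set inM sT.
    by rewrite par p2U1; case: (odd #|T|).
  - have p1g : <<p1 (g |: T)>> == setT.
      move: inM; rewrite !inE => /negbT; rewrite negb_or => /andP [ga gm].
      apply: (g1_gen m1 ga gm); rewrite p1U1 !inE ?mT ?orbT ?eqxx //.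
    case: ifP => E.
      by apply: nimT; rewrite genT // p1g p2U1 E.
    rewrite Y2 //.
    + by rewrite par p2U1; case: (odd #|T|).
    + exact: card_opt.
    + by rewrite p2U1 E. }
have tm : tr (p2 T) -> exists2 g, g \in GG :\: T & N n (g |: T) = 0%N.
{ case/existsP => h /eqP E.
  have hH : h \in H by rewrite -E mem_gen // setU11.
  have gin : ((z0, h) : gT) \in GG :\: T.
    rewrite in_setD inGG hH andbT; apply/negP => /p1_in /= /(subsetP sT).
    by rewrite !inE (negbTE z01) (negbTE z0m).
  by exists (z0, h) => //; rewrite opt //= E !inE (negbTE z01) (negbTE z0m) /= eqxx. }
case oT: (odd #|T|).
- have [g0 g0X g0T] : exists2 g, g \in setX [set 1; m] (p2 T) & g \notin T.
    apply: extra.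
    - apply/subsetP => -[z h] xT; rewrite in_setX /=.
      by rewrite (subsetP sT _ (p1_in xT)) (p2_in xT).
    - by rewrite cardsX cards2 eq_sym m1 oddM.
    - by rewrite oT.
  have g0in : g0 \in GG :\: T.
    rewrite in_setD g0T inGG; move: g0X; case: g0 {g0T} => z h.
    by rewrite in_setX => /andP [_ /(subsetP SH)].
  have v0 : N n (g0 |: T) = tr (p2 T).
    move: g0X; case: g0 g0in {g0T} => z h g0in; rewrite in_setX /= => /andP [zM hS].
    by rewrite opt //= (setU1_in hS) zM oT.
  apply: nim_val => //.
  + by move=> g gin; rewrite opt // oT; case: ifP => //; case: tr.
  + move=> k; case: k => [_|[_|//]].
    * case tS: (tr (p2 T)); first exact: tm.
      by exists g0 => //; rewrite v0 tS.
    * case tS: (tr (p2 T)); first by exists g0 => //; rewrite v0 tS.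
      have aS : a \notin p2 T.
        by apply/negP => aS; move: tS; rewrite tr_a.
      have gin : ((1, a) : gT) \in GG :\: T.
        rewrite in_setD inGG aH andbT; apply/negP => /p2_in /=.
        by rewrite (negbTE aS).
      exists (1, a) => //; rewrite opt //= oT !inE eqxx /=.
      by rewrite tr_a // ?setU11 // subUset sub1set aH SH.
- apply: nim_val => //.
  + move=> g gin; rewrite opt // oT; case: ifP => E.
      have -> : tr (p2 T) by apply/existsP; exists g.2; case/andP: E.
      by [].
    by case: tr.
  + move=> k; case tS: (tr (p2 T)) => //= ; rewrite ltnS leqn0 => /eqP ->.
    exact: tm.
Qed.

Lemma Y0 n : forall T : {set gT}, T \subset GG -> (#|GG :\: T| < n)%N ->
  p1 T \subset [set 1] ->
  N n T = if odd #|T| then (if [forall h in H, tr (h |: p2 T)] then 0%N else 2%N)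
          else 1%N.
Proof.
elim: n => [|n IH] T TG hc sT; first by [].
have SH := p2_sub TG.
have sT' : p1 T \subset [set 1; 1].
  by apply: subset_trans sT _; rewrite sub1set !inE eqxx.
have NT : ~~ (<<T>> == GG) by rewrite genT // (negbTE (g1_M sT')).
have [z0 /andP [z01 _]] := Z22_out 1.
have opt : forall g, g \in GG :\: T -> N n (g |: T) =
   if g.1 == 1 then
     (if odd #|T| then 1%N
      else if [forall h in H, tr (h |: (g.2 |: p2 T))] then 0%N else 2%N)
   else if odd #|T| then nat_of_bool (tr (g.2 |: p2 T)) else 2%N.
{ move=> g gin; have /setDP [gG gT] := gin.
  have gTG : g |: T \subset GG by rewrite subUset sub1set gG TG.
  have par : odd #|g |: T| = ~~ odd #|T| by rewrite cardsU1 gT add1n.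
  case g1: (g.1 == 1).
  - rewrite IH //.
    + by rewrite par p2U1; case: (odd #|T|).
    + exact: card_opt.
    + by rewrite p1U1 subUset sub1set inE g1 sT.
  - rewrite (MM gTG (card_opt hc gin) (m := g.1)) ?g1 //.
    + by rewrite par p2U1; case: (odd #|T|).
    + by rewrite p1U1 setU11.
    + rewrite p1U1 subUset sub1set !inE eqxx orbT /=.
      by apply: subset_trans sT _; rewrite sub1set !inE eqxx. }
case oT: (odd #|T|).
- apply: nim_val => //.
  + move=> g gin; rewrite opt // oT.
    have gH : g.2 \in H by rewrite -inGG; case/setDP: gin.
    case: (g.1 == 1) => /=; case: ifP => U //; last by case: tr.
    by have := forall_inP U _ gH; case: tr.
  + case: ifP => //= U k; case: k => [_|[_|//]].
    * have [h hH ntr] : exists2 h, h \in H & ~~ tr (h |: p2 T).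
        by apply/exists_inP; rewrite -negb_forall_in U.
      have gin : ((z0, h) : gT) \in GG :\: T.
        rewrite in_setD inGG hH andbT; apply/negP => /p1_in /= /(subsetP sT).
        by rewrite inE (negbTE z01).
      by exists (z0, h) => //; rewrite opt //= (negbTE z01) oT (negbTE ntr).
    * have gin : ((z0, a) : gT) \in GG :\: T.
        rewrite in_setD inGG aH andbT; apply/negP => /p1_in /= /(subsetP sT).
        by rewrite inE (negbTE z01).
      exists (z0, a) => //; rewrite opt //= (negbTE z01) oT.
      by rewrite tr_a // ?setU11 // subUset sub1set aH SH.
- have [h hH hS] : exists2 h, h \in H & h \notin p2 T.
    apply/exists_inP; rewrite -negb_forall_in; apply/negP => /forall_inP HS.
    have E : p2 T = H by apply/eqP; rewrite eqEsubset SH; apply/subsetP.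
    have c1 : (#|p2 T| <= #|T|)%N by apply: leq_imset_card.
    have c2 : (#|T| <= #|p2 T|)%N.
      have : T \subset setX [set 1] (p2 T).
        apply/subsetP => -[z k] xT; rewrite in_setX /=.
        by rewrite (subsetP sT _ (p1_in xT)) (p2_in xT).
      by move/subset_leq_card; rewrite cardsX cards1 mul1n.
    have : #|T| = #|H| by rewrite -E; apply/eqP; rewrite eqn_leq c1 c2.
    by move=> ET; move: oT; rewrite ET Hodd.
  pose h' := if a \in p2 T then h else a.
  have h'H : h' \in H by rewrite /h'; case: ifP => _; [exact: hH | exact: aH].
  have h'S : h' \notin p2 T by rewrite /h'; case: ifP => // ->.
  have h'a : a \in h' |: p2 T.
    by rewrite /h'; case: ifP => aS; rewrite ?setU11 // in_setU1 aS orbT.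
  apply: nim_val => //.
  + move=> g gin; rewrite opt // oT /=.
    by case: ifP => _ //; case: ifP.
  + move=> k; rewrite ltnS leqn0 => /eqP ->.
    have gin : ((1, h') : gT) \in GG :\: T.
      rewrite in_setD inGG h'H andbT; apply/negP => /p2_in /=.
      by rewrite (negbTE h'S).
    exists (1, h') => //; rewrite opt //= oT.
    suff -> : [forall x in H, tr (x |: (h' |: p2 T))] by [].
    apply/forall_inP => x xH; apply: tr_a.
    + by rewrite !subUset !sub1set xH h'H SH.
    + by rewrite inE h'a orbT.
Qed.

End Main.

Local Close Scope group_scope.

Theorem mainTheorem10 (hT : finGroupType) (H : {group hT})
  (Hodd : odd #|H|) (dH : gen_rank H = 2)
  (P : {set ('Z_2 * 'Z_2 * hT)%type}) :
  let G := setX [set: 'Z_2 * 'Z_2] H in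
  P \subset setX [set 1%g] H ->
  ~~ odd #|P| ->
  nim G P = 1.
Proof.
move=> G sP eP.
have [a [b Hab]] : exists a b, (<<[set a; b]>> = H)%g.
{ move: dH; rewrite /gen_rank.
  set p := (fun k => _).
  case hp: (has p (iota 0 #|H|.+1)).
  - move=> fd; have := nth_find 0%N hp.
    have lt : (2 < #|H|.+1)%N by move: hp; rewrite has_find fd size_iota.
    rewrite fd nth_iota // /p.
    move/existsP => [A /and3P [_ /cards2P [x [y [_ EA]]] /eqP E]].
    by exists x, y; rewrite -EA.
  - move/negbT: hp => /hasNfind ->; rewrite size_iota => [[H1]].
    exists 1%g, 1%g; apply/eqP; rewrite eqEcard gen_subG subUset !sub1set group1 /=.
    by rewrite H1 cardG_gt0. }
have := @Y0 hT H Hodd a b Hab #|G|.+1 P.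
rewrite (negbTE eP); apply.
- by apply: subset_trans sP _; apply: setXS; [apply: subsetT | apply: subxx].
- by rewrite ltnS subset_leq_card // subsetDl.
- apply/subsetP => z /imsetP [x xP ->].
  by move: (subsetP sP x xP); case: x {xP} => z' h; rewrite in_setX /= => /andP [].
Qed.
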